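(* Let $k$ be an algebraically closed field of characteristic zero and let $A$ be an integral normal $k$-algebra. Then for every nonzero locally nilpotent $k$-derivation $\partial$ of $A$, the Rees algebra $R(A,\partial)$ is integral and normal.
   Context: For a locally nilpotent $k$-derivation $\partial$ of $A$, the Rees algebra is $R(A,\partial)=\bigoplus_{n\geq0}\ker(\partial^{n+1})\,\upsilon^n\subseteq A[\upsilon]$, graded by $n$, with multiplication induced by $A[\upsilon]$. *)

(* Defs.v *)
From HB Require Import structures.
From mathcomp Require Import all_boot all_order all_algebra.
Set Implicit Arguments. Unset Strict Implicit. Unset Printing Implicit Defensive.
Import Order.TTheory GRing.Theory Num.Theory.
Local Open Scope ring_scope.

(* A k-algebra A is given as an integral domain A together with the structure
   morphism iota : k -> A. *)

Definition is_derivation (A : comNzRingType) (d : A -> A) : Prop :=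
  (forall a b, d (a + b) = d a + d b) /\
  (forall a b, d (a * b) = a * d b + d a * b).

Definition k_linear (k : fieldType) (A : comNzRingType) (iota : k -> A)
    (d : A -> A) : Prop :=
  forall (c : k) (a : A), d (iota c * a) = iota c * d a.

Definition locally_nilpotent (A : comNzRingType) (d : A -> A) : Prop :=
  forall a : A, exists n : nat, iter n d a = 0.

(* Membership in the Rees algebra
   R(A,d) = \bigoplus_n ker(d^(n+1)) v^n  inside A[v] = {poly A}. *)
Definition in_rees (A : comNzRingType) (d : A -> A) (p : {poly A}) : Prop :=
  forall n : nat, iter n.+1 d p`_n = 0.

Notation tofrac := (@FracField.tofrac _).
Local Notation "x %:F" := (tofrac x).

Definition subring_of (B : comNzRingType) (S : B -> Prop) : Prop :=
  [/\ S 1, (forall a b, S a -> S b -> S (a - b)) &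
      (forall a b, S a -> S b -> S (a * b))].

Definition integral_subring (B : idomainType) (S : B -> Prop) : Prop :=
  [/\ subring_of S, (1 : B) != 0 &
      (forall a b, S a -> S b -> a * b = 0 -> a = 0 \/ b = 0)].

(* A subring S of an integral domain B is normal: every element of its
   fraction field (realized inside {fraction B} as the quotients p/q with
   p, q in S, q <> 0) that is a root of a monic polynomial with coefficients
   in S already lies in S. *)
Definition normal_subring (B : idomainType) (S : B -> Prop) : Prop :=
  forall x : {fraction B},
    (exists p q : B, [/\ S p, S q, q != 0 & x = p%:F / q%:F]) ->
    (exists P : {poly {fraction B}},
        [/\ P \is monic,
            (forall i, (i < size P)%N -> exists s, S s /\ P`_i = s%:F)
          & root P x]) ->
    exists s, S s /\ x = s%:F.

Definition normal_domain (A : idomainType) : Prop :=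
  normal_subring (fun _ : A => True).

(* Main.v *)
Require Import Defs.
From HB Require Import structures.
From mathcomp Require Import all_boot all_order all_algebra.
From mathcomp Require Import zify ring generic_quotient.
From Stdlib Require Import Classical.
Set Implicit Arguments. Unset Strict Implicit. Unset Printing Implicit Defensive.
Import GRing.Theory.
Local Open Scope ring_scope.
Notation tf := (@FracField.tofrac _).

Lemma der0 (A : comNzRingType) (d : A -> A) : is_derivation d -> d 0 = 0.
Proof.
case=> hD _; have h := hD 0 0; rewrite addr0 in h.
by apply: (addrI (d 0)); rewrite -h addr0.
Qed.

Lemma derN (A : comNzRingType) (d : A -> A) : is_derivation d -> forall a, d (- a) = - d a.
Proof.
move=> hd a; have h := (proj1 hd) a (- a); rewrite subrr der0 // in h.
by apply: (addrI (d a)); rewrite -h subrr.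
Qed.

Lemma der1 (A : comNzRingType) (d : A -> A) : is_derivation d -> d 1 = 0.
Proof.
case=> _ hM; have h := hM 1 1; rewrite !mul1r mulr1 in h.
by apply: (addrI (d 1)); rewrite -h addr0.
Qed.

Lemma iter0d (A : comNzRingType) (d : A -> A) : is_derivation d -> forall n, iter n d 0 = 0.
Proof. by move=> hd; elim=> //= n ->; rewrite der0. Qed.

Lemma iterDd (A : comNzRingType) (d : A -> A) : is_derivation d ->
  forall n a b, iter n d (a + b) = iter n d a + iter n d b.
Proof. by move=> hd; elim=> //= n IH a b; rewrite IH (proj1 hd). Qed.

Lemma iterNd (A : comNzRingType) (d : A -> A) : is_derivation d ->
  forall n a, iter n d (- a) = - iter n d a.
Proof. by move=> hd; elim=> //= n IH a; rewrite IH derN. Qed.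

Lemma iterBd (A : comNzRingType) (d : A -> A) : is_derivation d ->
  forall n a b, iter n d (a - b) = iter n d a - iter n d b.
Proof. by move=> hd n a b; rewrite iterDd // iterNd. Qed.

Lemma iter_sumd (A : comNzRingType) (d : A -> A) : is_derivation d ->
  forall n (I : Type) (r : seq I) (P : pred I) (F : I -> A),
  iter n d (\sum_(i <- r | P i) F i) = \sum_(i <- r | P i) iter n d (F i).
Proof.
move=> hd n I r P F; apply: (big_morph (iter n d)); first exact: iterDd.
exact: iter0d.
Qed.

Lemma iter_mono0 (A : comNzRingType) (d : A -> A) : is_derivation d ->
  forall m n a, (m <= n)%N -> iter m d a = 0 -> iter n d a = 0.
Proof.
move=> hd m n a /subnKC <- h; by rewrite addnC iterD h iter0d.
Qed.

Lemma iter_mul0 (A : comNzRingType) (d : A -> A) : is_derivation d ->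
  forall a1 b1 a b, iter a1 d a = 0 -> iter b1.+1 d b = 0 ->
  iter (a1 + b1) d (a * b) = 0.
Proof.
move=> hd a1 b1 a b; move Hn : (a1 + b1)%N => N.
elim: N a1 b1 a b Hn => [|N IH] a1 b1 a b Hn ha hb.
  by move: Hn ha => /eqP; rewrite addn_eq0 => /andP[/eqP -> _] /= ->; rewrite mul0r.
rewrite iterSr (proj2 hd) iterDd //.
have -> : iter N d (a * d b) = 0.
  case: b1 Hn hb => [|b'] Hn hb.
    by move: hb => /= ->; rewrite mulr0 iter0d.
  apply: (IH a1 b'); [lia | done | by rewrite -iterSr].
have -> : iter N d (d a * b) = 0.
  case: a1 Hn ha => [|a'] Hn ha.
    by move: ha => /= ->; rewrite der0 // mul0r iter0d.
  apply: (IH a' b1); [lia | by rewrite -iterSr | done].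
by rewrite addr0.
Qed.

Lemma iter_mul_top (A : comNzRingType) (d : A -> A) : is_derivation d ->
  forall B1 B2 a b, iter B1.+1 d a = 0 -> iter B2.+1 d b = 0 ->
  iter (B1 + B2) d (a * b) = (iter B1 d a * iter B2 d b) *+ 'C(B1 + B2, B1).
Proof.
move=> hd B1 B2 a b; move Hn : (B1 + B2)%N => N.
elim: N B1 B2 a b Hn => [|N IH] B1 B2 a b Hn ha hb.
  by move: Hn => /eqP; rewrite addn_eq0 => /andP[/eqP -> /eqP ->] /=.
rewrite iterSr (proj2 hd) iterDd //.
case: B1 Hn ha => [|B1] Hn ha; case: B2 Hn hb => [|B2] Hn hb //.
- move: ha => /= ha; rewrite ha mul0r iter0d // addr0.
  rewrite (IH 0%N B2 a (d b)) //=; [|lia|by rewrite -iterSr].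
  by rewrite !bin0 -iterSr.
- move: hb => /= hb; rewrite hb mulr0 iter0d // add0r.
  rewrite (IH B1 0%N (d a) b); [|lia|by rewrite -iterSr|done].
  have -> : N = B1 by lia.
  by rewrite -iterSr !binn.
- rewrite (IH B1.+1 B2 a (d b)); [|lia|done|by rewrite -iterSr].
  rewrite (IH B1 B2.+1 (d a) b); [|lia|by rewrite -iterSr|done].
  by rewrite -!iterSr binS mulrnDr.
Qed.

Definition bnd (A : comNzRingType) (d : A -> A) (E : nat) (g : {poly A}) :=
  forall n, iter (n + E).+1 d g`_n = 0.

Definition top (A : comNzRingType) (d : A -> A) (E t : nat) (g : {poly A}) :=
  [/\ bnd d E g, iter (t + E) d g`_t != 0 &
      forall n, (t < n)%N -> iter (n + E) d g`_n = 0].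

Lemma bnd_mul (A : comNzRingType) (d : A -> A) : is_derivation d ->
  forall E E' g h, bnd d E g -> bnd d E' h -> bnd d (E + E') (g * h).
Proof.
move=> hd E E' g h hg hh N; rewrite coefM iter_sumd //; apply: big1 => i _.
have -> : ((N + (E + E')).+1 = (i + E).+1 + (N - i + E'))%N.
  by have := ltn_ord i; lia.
by apply: iter_mul0 => //; rewrite hh.
Qed.

Lemma bnd_mono (A : comNzRingType) (d : A -> A) : is_derivation d ->
  forall E E' g, (E <= E')%N -> bnd d E g -> bnd d E' g.
Proof.
move=> hd E E' g hE hg n; apply: (iter_mono0 hd _ (hg n)); lia.
Qed.

Lemma bnd_add (A : comNzRingType) (d : A -> A) : is_derivation d ->
  forall E g h, bnd d E g -> bnd d E h -> bnd d E (g + h).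
Proof. by move=> hd E g h hg hh n; rewrite coefD iterDd // hg hh addr0. Qed.

Lemma bnd_opp (A : comNzRingType) (d : A -> A) : is_derivation d ->
  forall E g, bnd d E g -> bnd d E (- g).
Proof. by move=> hd E g hg n; rewrite coefN iterNd // hg oppr0. Qed.

Lemma bnd0 (A : comNzRingType) (d : A -> A) : is_derivation d ->
  forall E, bnd d E 0.
Proof. by move=> hd E n; rewrite coef0 iter0d. Qed.

Lemma bnd1 (A : comNzRingType) (d : A -> A) : is_derivation d ->
  forall E, bnd d E 1.
Proof.
move=> hd E n; rewrite coef1; case: eqP => [-> | _]; last by rewrite iter0d.
by rewrite add0n iterSr der1 // iter0d.
Qed.

Lemma bnd_sum (A : comNzRingType) (d : A -> A) : is_derivation d ->
  forall E (I : Type) (r : seq I) (P : pred I) (F : I -> {poly A}),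
  (forall i, P i -> bnd d E (F i)) -> bnd d E (\sum_(i <- r | P i) F i).
Proof.
move=> hd E I r P F hF; apply: big_ind => //; [exact: bnd0 | exact: bnd_add].
Qed.

Lemma top_mul (A : idomainType) (d : A -> A) : is_derivation d ->
  (forall n, (0 < n)%N -> (n%:R : A) != 0) ->
  forall E E' t t' g h, top d E t g -> top d E' t' h ->
  top d (E + E') (t + t') (g * h).
Proof.
move=> hd hc E E' t t' g h [bg ng sg] [bh nh sh].
have kill : forall N (i : 'I_N.+1), ((t < i)%N || (t' < N - i)%N) ->
    iter (N + (E + E')) d (g`_i * h`_(N - i)) = 0.
  move=> N i /orP[lt|lt].
    have -> : (N + (E + E') = (i + E) + (N - i + E'))%N.
      by have := ltn_ord i; lia.
    exact: (iter_mul0 hd (sg _ lt) (bh _)).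
  have -> : (N + (E + E') = (N - i + E') + (i + E))%N.
    by have := ltn_ord i; lia.
  by rewrite mulrC; exact: (iter_mul0 hd (sh _ lt) (bg _)).
split; first exact: bnd_mul.
- rewrite coefM iter_sumd //.
  have ht : (t < (t + t').+1)%N by lia.
  rewrite (bigD1 (Ordinal ht)) //= big1 ?addr0.
    have -> : (t + t' - t = t')%N by lia.
    have -> : (t + t' + (E + E') = (t + E) + (t' + E'))%N by lia.
    rewrite (iter_mul_top hd (bg t) (bh t')).
    rewrite -mulr_natr mulf_neq0 // ?mulf_neq0 //.
    by apply: hc; rewrite bin_gt0; lia.
  move=> i hi; apply: kill.
  have : (i : nat) != t by apply: contra hi => /eqP hi'; apply/eqP/val_inj.
  have := ltn_ord i; lia.
- move=> N hN; rewrite coefM iter_sumd //; apply: big1 => i _; apply: kill.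
  have := ltn_ord i; lia.
Qed.

Lemma top1 (A : idomainType) (d : A -> A) : is_derivation d -> top d 0 0 1.
Proof.
move=> hd; split; first exact: bnd1.
- by rewrite coef1 /= oner_neq0.
- by move=> n hn; rewrite coef1; case: eqP => [e|_]; [lia | rewrite iter0d].
Qed.

Lemma top_exp (A : idomainType) (d : A -> A) : is_derivation d ->
  (forall n, (0 < n)%N -> (n%:R : A) != 0) ->
  forall E t f m, top d E t f -> top d (m * E) (m * t) (f ^+ m).
Proof.
move=> hd hc E t f m hf; elim: m => [|m IH]; first by rewrite !mul0n expr0; exact: top1.
by rewrite exprS !mulSn; apply: top_mul.
Qed.

Lemma lnd_bound (A : comNzRingType) (d : A -> A) : is_derivation d ->
  locally_nilpotent d -> forall s (F : nat -> A),
  exists N, forall i, (i < s)%N -> iter N d (F i) = 0.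
Proof.
move=> hd hln s F; elim: s => [|s [N hN]]; first by exists 0%N.
have [M hM] := hln (F s).
exists (maxn N M) => i; rewrite ltnS leq_eqVlt => /orP[/eqP -> | lt].
  by apply: (iter_mono0 hd _ hM); apply: leq_maxr.
by apply: (iter_mono0 hd _ (hN i lt)); apply: leq_maxl.
Qed.

Lemma find_top (A : comNzRingType) (d : A -> A) : is_derivation d ->
  locally_nilpotent d -> forall f : {poly A}, ~ bnd d 0 f ->
  exists E t, (0 < E)%N /\ top d E t f.
Proof.
move=> hd hln f nb.
have [n hn] : exists n, iter (n + 0).+1 d f`_n != 0.
  apply: NNPP => hne; apply: nb => n; apply: NNPP => hn.
  by apply: hne; exists n; apply/eqP.
have ns : (n < size f)%N.
  rewrite ltnNge; apply/negP => hs; move: hn; rewrite nth_default //.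
  by rewrite iter0d // eqxx.
have [N hN] := lnd_bound hd hln (size f) (fun i => f`_i).
pose P E := [exists i : 'I_(size f), iter (i + E) d f`_i != 0].
have P1 : P 1%N by apply/existsP; exists (Ordinal ns); move: hn; rewrite addn0 addn1.
have Pb : forall E, P E -> (E <= N)%N.
  move=> E /existsP [i hi]; rewrite leqNgt; apply/negP => lt.
  move: hi; rewrite (iter_mono0 hd _ (hN i (ltn_ord i))) ?eqxx //; lia.
case: (ex_maxnP (ex_intro P _ P1) Pb) => E PE maxE.
have [i0 hi0] := existsP PE.
pose Q t := (t < size f)%N && (iter (t + E) d f`_t != 0).
have Q0 : Q i0 by rewrite /Q ltn_ord.
have Qb : forall t, Q t -> (t <= size f)%N by move=> t /andP[/ltnW].
case: (ex_maxnP (ex_intro Q _ Q0) Qb) => t /andP[ts Qt] maxt.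
exists E, t; split; first exact: maxE.
split => //.
- move=> m; case: (ltnP m (size f)) => ms; last by rewrite nth_default // iter0d.
  apply/eqP; apply: contraT => hm.
  have : P E.+1 by apply/existsP; exists (Ordinal ms); rewrite addnS.
  by move/maxE; rewrite ltnn.
- move=> m lt; case: (ltnP m (size f)) => ms; last by rewrite nth_default // iter0d.
  apply/eqP; apply: contraT => hm.
  have : Q m by rewrite /Q ms.
  by move/maxt; rewrite leqNgt lt.
Qed.

Lemma rees_integral (A : idomainType) (d : A -> A) : is_derivation d ->
  (forall n, (0 < n)%N -> (n%:R : A) != 0) -> locally_nilpotent d ->
  forall (f : {poly A}) (Pa : {poly {poly A}}),
  Pa \is monic -> (forall i, bnd d 0 Pa`_i) -> root Pa f -> bnd d 0 f.
Proof.
move=> hd hc hln f Pa mon hPa rt; apply: NNPP => nb.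
have [E [t [E0 tf]]] := find_top hd hln nb.
move: rt; rewrite /root horner_coef.
have sz : size Pa = ((size Pa).-1).+1 by rewrite prednK // size_poly_gt0 monic_neq0.
move: (size Pa).-1 sz => m sz; rewrite sz big_ord_recr /=.
have lc : Pa`_m = 1 by move/monicP: mon; rewrite /lead_coef sz /=.
rewrite lc mul1r addrC addr_eq0 => /eqP hm.
have hb : bnd d (m * E).-1 (f ^+ m).
  rewrite hm; apply: bnd_opp => //; apply: bnd_sum => // i _.
  apply: (@bnd_mono _ _ hd (0 + i * E)%N); first by have := ltn_ord i; nia.
  apply: bnd_mul => //; case: (top_exp hd hc i tf) => //.
case: m sz lc hm hb => [|m] sz lc hm hb.
  by move: hm; rewrite big_ord0 expr0 oppr0 => /eqP; rewrite oner_eq0.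
case: (top_exp hd hc m.+1 tf) => _ nz _.
move: (hb (m.+1 * t)%N); rewrite -addnS prednK; last by nia.
by move/eqP; rewrite (negPf nz).
Qed.

Local Open Scope quotient_scope.

Lemma frac_repr (A : idomainType) (x : {fraction A}) :
  exists p q : A, q != 0 /\ x = (tofrac p) / (tofrac q).
Proof.
elim/quotW: x => r.
have dr : \d_r != 0 by have := denom_ratioP r.
exists (\n_r), (\d_r); split => //.
have dn : tofrac (\d_r) != 0 by rewrite tofrac_eq0.
apply: (mulIf dn); rewrite divfK //.
unlock tofrac.
rewrite -[_ * _]FracField.pi_mul.
apply/eqmodP => /=; rewrite FracField.equivfE /FracField.mulf /=.
rewrite !numer_Ratio ?oner_neq0 // !denom_Ratio ?oner_neq0 ?mulr1 // ?numer_Ratio ?denom_Ratio ?mulr1 // ?mulf_neq0 //.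
by rewrite mulrC.
Qed.

Lemma normal_int (A : idomainType) : normal_domain A ->
  forall (y : {fraction A}) (Q : {poly A}), Q \is monic ->
  root (map_poly tf Q) y -> exists b, y = tf b.
Proof.
move=> hn y Q mon rt.
have [p [q [q0 ey]]] := frac_repr y.
have h1 : exists p q : A, [/\ True, True, q != 0 & y = tf p / tf q].
  by exists p, q; split.
have h2 : exists P : {poly {fraction A}}, [/\ P \is monic,
    forall i : nat, (i < size P)%N -> exists s : A, True /\ P`_i = tf s
  & root P y].
  exists (map_poly tf Q); split => //; first exact: monic_map.
  by move=> i _; exists Q`_i; rewrite coef_map.
by have [s [_ ->]] := hn y h1 h2; exists s.
Qed.

Lemma inv_nat (k : fieldType) (A : idomainType) (iota : {rmorphism k -> A}) :
  [pchar k] =i pred0 -> forall n, (0 < n)%N -> exists e : A, e * n%:R = 1.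
Proof.
move=> hk n n0; exists (iota (n%:R)^-1).
rewrite -(rmorph_nat iota) -rmorphM mulVf ?rmorph1 //.
by move/pcharf0P: hk => ->; rewrite -lt0n.
Qed.

Lemma interp (A : idomainType) :
  (forall n, (0 < n)%N -> exists e : A, e * n%:R = 1) ->
  forall n (H : {poly {fraction A}}) b, (size H <= n)%N ->
  (forall j, (b <= j)%N -> exists e, H.[j%:R] = tf e) ->
  exists f, H = map_poly tf f.
Proof.
move=> hinv; elim=> [|n IH] H b hs hv.
  by exists 0; move: hs; rewrite size_poly_leq0 => /eqP ->; rewrite rmorph0.
have [e he] := hv b (leqnn b).
have rt : root (H - (tf e)%:P) (b%:R).
  by rewrite /root hornerD hornerN hornerC he subrr.
have [H1 eH1] := factor_theorem _ _ rt.
have s1 : (size H1 <= n)%N.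
  have [-> | nz] := eqVneq H1 0; first by rewrite size_poly0.
  have := size_polyD H (- (tf e)%:P); rewrite eH1 size_Mmonic ?monicXsubC //.
  rewrite size_XsubC size_polyN addn2 /=.
  move=> h; rewrite -ltnS; apply: (leq_trans h); rewrite geq_max hs /=.
  exact: leq_trans (size_polyC_leq1 _) _.
have [f1 ef1] : exists f1, H1 = map_poly tf f1.
  apply: (IH H1 b.+1 s1) => j hj.
  have [ej hej] := hv j (ltnW hj).
  have jb : (0 < j - b)%N by rewrite subn_gt0.
  have [ij hij] := hinv (j - b)%N jb.
  exists ((ej - e) * ij).
  have := congr1 (fun p => p.[j%:R]) eH1.
  rewrite /= hornerD hornerN hornerC hej hornerM hornerXsubC => h.
  have e2 : (j%:R - b%:R : {fraction A}) = tf ((j - b)%N%:R : A).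
    by rewrite rmorph_nat natrB //; apply: ltnW.
  rewrite e2 in h.
  rewrite rmorphM /= rmorphB /= h -mulrA -rmorphM /= [_ * ij]mulrC hij.
  by rewrite rmorph1 mulr1.
exists (f1 * ('X - (b%:R)%:P) + e%:P).
rewrite rmorphD rmorphM /= -ef1 rmorphB /= map_polyX map_polyC /= rmorph_nat.
by rewrite -eH1 map_polyC subrK.
Qed.

Lemma hsum_scale (R : comNzRingType) (c : nat -> R) m (u v y : R) :
  \sum_(i < m.+1) c i * (u * y) ^+ i * (v * y) ^+ (m - i) =
  y ^+ m * \sum_(i < m.+1) c i * u ^+ i * v ^+ (m - i).
Proof.
rewrite mulr_sumr; apply: eq_bigr => i _.
have hi : (i <= m)%N by have := ltn_ord i.
rewrite !exprMn.
have -> : y ^+ m = y ^+ i * y ^+ (m - i) by rewrite -exprD subnKC.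
move: (y ^+ i) (y ^+ (m - i)) (u ^+ i) (v ^+ (m - i)) (c i) => a b e f g.
ring.
Qed.

Lemma hsum_scale1 (R : comNzRingType) (c : nat -> R) m (u y : R) :
  \sum_(i < m.+1) c i * (u * y) ^+ i * y ^+ (m - i) =
  y ^+ m * \sum_(i < m.+1) c i * u ^+ i.
Proof.
have := hsum_scale c m u 1 y; rewrite mul1r => ->; congr (_ * _).
by apply: eq_bigr => i _; rewrite expr1n mulr1.
Qed.

Lemma gcd_step (K : fieldType) (c : nat -> {poly K}) m (P Q : {poly K}) :
  Q != 0 -> c m = 1 ->
  \sum_(i < m.+1) c i * P ^+ i * Q ^+ (m - i) = 0 ->
  exists H, P = H * Q /\ \sum_(i < m.+1) c i * H ^+ i = 0.
Proof.
move=> Q0 cm eq0.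
pose g := gcdp P Q.
have g0 : g != 0 by rewrite gcdp_eq0 negb_and Q0 orbT.
have hP : P = (P %/ g) * g by rewrite divpK // dvdp_gcdl.
have hQ : Q = (Q %/ g) * g by rewrite divpK // dvdp_gcdr.
have cop : coprimep (P %/ g) (Q %/ g) by apply: coprimep_div_gcd; rewrite Q0 orbT.
move: (P %/ g) (Q %/ g) hP hQ cop => P1 Q1 hP hQ cop.
have eq1 : \sum_(i < m.+1) c i * P1 ^+ i * Q1 ^+ (m - i) = 0.
  move: eq0; rewrite {1}hP {1}hQ hsum_scale => /eqP.
  by rewrite mulf_eq0 expf_eq0 (negPf g0) andbF /= => /eqP.
have dv : Q1 %| P1 ^+ m.
  move: eq1; rewrite big_ord_recr /= cm subnn expr0 mulr1 mul1r.
  move/eqP; rewrite addrC addr_eq0 => /eqP ->; rewrite dvdpNr.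
  apply: (big_ind (fun x => Q1 %| x)); first exact: dvdp0.
    by move=> x y; apply: dvdp_add.
  move=> i _; have hi : (0 < m - i)%N by rewrite subn_gt0.
  by rewrite -(prednK hi) exprS mulrCA dvdp_mulIl.
have : Q1 %| 1.
  have cop2 : coprimep Q1 (P1 ^+ m) by apply: coprimep_expr; rewrite coprimep_sym.
  by rewrite -(Gauss_dvdpl 1 cop2) mul1r.
rewrite dvdp1 => /size_poly1P [a a0 ea].
exists (a^-1 *: P1); split.
  rewrite hP hQ ea -mul_polyC mulrA; congr (_ * _).
  by rewrite mulrC mulrA -polyCM mulfV // mul1r.
apply/eqP; move: eq0 => /eqP; apply: contraLR => ne.
have -> : P = (a^-1 *: P1) * Q.
  rewrite hP hQ ea -mul_polyC mulrA; congr (_ * _).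
  by rewrite mulrC mulrA -polyCM mulfV // mul1r.
by rewrite hsum_scale1 mulf_neq0 // expf_neq0.
Qed.

Lemma tf_inj (B : idomainType) : injective (tf : B -> {fraction B}).
Proof. by move=> a b /eqP; rewrite tofrac_eq => /eqP. Qed.

Lemma lift_poly (B : idomainType) (S : B -> Prop) (P : {poly {fraction B}}) :
  S 0 -> (forall i, (i < size P)%N -> exists s, S s /\ P`_i = tf s) ->
  exists Pa : {poly B}, map_poly tf Pa = P /\ forall i, S Pa`_i.
Proof.
move=> S0 hP.
suff [Pa [h1 h2 h3]] : exists Pa : {poly B}, [/\ forall i, S Pa`_i,
    forall i, (i < size P)%N -> tf Pa`_i = P`_i & forall i, (size P <= i)%N -> Pa`_i = 0].
  exists Pa; split => //; apply/polyP => i; rewrite coef_map.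
  case: (ltnP i (size P)) => hi; first exact: h2.
  by rewrite h3 // nth_default // rmorph0.
have : forall n, (n <= size P)%N -> exists Pa : {poly B}, [/\ forall i, S Pa`_i,
    forall i, (i < n)%N -> tf Pa`_i = P`_i & forall i, (n <= i)%N -> Pa`_i = 0].
  elim=> [|n IH] hn.
    by exists 0; split => // i; rewrite coef0.
  have [Pa [h1 h2 h3]] := IH (ltnW hn).
  have [s [Ss es]] := hP n hn.
  exists (Pa + s%:P * 'X^n); split.
  - move=> i; rewrite coefD coefCM coefXn; case: eqP => [-> | _].
      by rewrite h3 // add0r mulr1.
    by rewrite mulr0 addr0.
  - move=> i hi; rewrite coefD coefCM coefXn; case: eqP => [-> | ne].
      by rewrite h3 // add0r mulr1 es.
    rewrite mulr0 addr0 h2 //; move: hi ne; rewrite ltnS leq_eqVlt => /orP[/eqP -> //|//].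
  - move=> i hi; rewrite coefD coefCM coefXn h3 ?(ltnW hi) //.
    by case: eqP => [e|_]; [move: hi; rewrite e ltnn | rewrite mulr0 addr0].
by move/(_ (size P) (leqnn _)).
Qed.

Lemma bnd_rees (A : comNzRingType) (d : A -> A) g : bnd d 0 g <-> in_rees d g.
Proof.
by split => h n; [have := h n; rewrite addn0 | rewrite addn0; exact: h].
Qed.

Theorem corollary2p5 (k : closedFieldType) (A : idomainType)
    (iota : {rmorphism k -> A}) :
  [pchar k] =i pred0 ->
  normal_domain A ->
  forall d : A -> A,
    is_derivation d -> k_linear iota d -> locally_nilpotent d ->
    (exists a : A, d a != 0) ->
    integral_subring (in_rees d) /\ normal_subring (in_rees d).
Proof.
move=> hk hn d hd _ hln _.
have hinv := inv_nat iota hk.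
have hc : forall n, (0 < n)%N -> (n%:R : A) != 0.
  move=> n n0; have [e he] := hinv n n0; apply/eqP => h0.
  by move: he; rewrite h0 mulr0 => /eqP; rewrite eq_sym oner_eq0.
have br : forall g, in_rees d g -> bnd d 0 g := fun g h => proj2 (bnd_rees d g) h.
split.
  split.
  - split.
    + by apply/bnd_rees; apply: bnd1.
    + move=> a b /br ha /br hb; apply/bnd_rees.
      by apply: bnd_add => //; apply: bnd_opp.
    + move=> a b /br ha /br hb; apply/bnd_rees.
      by have := bnd_mul hd ha hb.
  - exact: oner_neq0.
  - by move=> a b _ _ /eqP; rewrite mulf_eq0 => /orP[/eqP ->|/eqP ->]; [left|right].
move=> x [p [q [Sp Sq q0 ex]]] [P [mon hcoef rt]].
have S0 : in_rees d 0 by apply/bnd_rees; apply: bnd0.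
have [Pa [ePa SPa]] := lift_poly S0 hcoef.
have tfi := @tf_inj {poly A}.
have szP : size P = size Pa by rewrite -ePa size_map_inj_poly.
have lPa : lead_coef Pa = 1.
  have h := lead_coef_map_inj (@tf_inj {poly A}) (rmorph0 _) Pa.
  rewrite ePa (monicP mon) in h.
  by apply: tfi; rewrite rmorph1 h.
have mPa : Pa \is monic by apply/monicP.
have sz : size Pa = ((size Pa).-1).+1 by rewrite prednK // size_poly_gt0 monic_neq0.
move: (size Pa).-1 sz => m sz.
have cm : Pa`_m = 1 by move: lPa; rewrite /lead_coef sz.
have tq0 : tf q != 0 by rewrite tofrac_eq0.
have E0 : \sum_(i < m.+1) Pa`_i * p ^+ i * q ^+ (m - i) = 0.
  apply: tfi; rewrite rmorph0 rmorph_sum /=.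
  have -> : \sum_(i < m.+1) tf (Pa`_i * p ^+ i * q ^+ (m - i)) =
      \sum_(i < m.+1) tf Pa`_i * (x * tf q) ^+ i * tf q ^+ (m - i).
    apply: eq_bigr => i _; rewrite !rmorphM !rmorphXn /= ex divfK //.
  rewrite (hsum_scale1 (fun i => tf Pa`_i)); apply/eqP; rewrite mulf_eq0; apply/orP; right.
  apply/eqP; apply: (etrans _ (eqP rt)); rewrite horner_coef szP sz.
  by apply: eq_bigr => i _; rewrite -ePa coef_map.
have phii : injective (map_poly (tf : A -> {fraction A})) := map_inj_poly (@tf_inj A) (rmorph0 _).
have E1 : \sum_(i < m.+1) (map_poly (tf : A -> {fraction A})) Pa`_i * (map_poly (tf : A -> {fraction A})) p ^+ i * (map_poly (tf : A -> {fraction A})) q ^+ (m - i) = 0.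
  have := congr1 (map_poly (tf : A -> {fraction A})) E0; rewrite rmorph0 rmorph_sum /= => h; apply: (etrans _ h).
  by apply: eq_bigr => i _; rewrite !rmorphM !rmorphXn.
have phq0 : (map_poly (tf : A -> {fraction A})) q != 0 by apply: contra q0 => /eqP; rewrite -(rmorph0 (map_poly (tf : A -> {fraction A}))) => /phii ->.
have cm2 : map_poly (tf : A -> {fraction A}) Pa`_m = 1 by rewrite cm rmorph1.
have [H [eH rH]] := gcd_step (c := fun i => map_poly (tf : A -> {fraction A}) Pa`_i) phq0 cm2 E1.
have rtH : root (map_poly (map_poly (tf : A -> {fraction A})) Pa) H.
  rewrite /root horner_coef size_map_inj_poly //; last exact: rmorph0.
  rewrite sz; apply/eqP; rewrite -[RHS]rH; apply: eq_bigr => i _.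
  by rewrite coef_map.
have vals : forall j : nat, (0 <= j)%N -> exists e, H.[j%:R] = tf e.
  move=> j _.
  pose Qj := map_poly (horner_eval (j%:R : A)) Pa.
  have mQ : Qj \is monic by apply: monic_map.
  apply: (normal_int hn mQ).
  suff -> : map_poly tf Qj =
      map_poly (horner_eval (j%:R : {fraction A})) (map_poly (map_poly (tf : A -> {fraction A})) Pa).
    by have := rmorph_root (horner_eval (j%:R : {fraction A})) rtH; apply.
  rewrite /Qj -!map_poly_comp; apply: eq_map_poly => c /=.
  by rewrite !horner_evalE -(rmorph_nat (tf : A -> {fraction A})) horner_map.
have [f ef] := interp hinv (leqnn (size H)) vals.
have epf : p = f * q by apply: phii; rewrite rmorphM /= -ef -eH.
have rtf : root Pa f.
  move: rtH; rewrite ef /root horner_map.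
  by rewrite -(rmorph0 (map_poly (tf : A -> {fraction A}))) (inj_eq phii).
have bf := rees_integral hd hc hln mPa (fun i => br _ (SPa i)) rtf.
exists f; split; first exact/bnd_rees.
by rewrite ex epf rmorphM /= mulfK.
Qed.
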